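(* Let $S$ be an entropy function for a finite set $X$, $X'\subset X$, and $S'(A):=\min_{\hat A\subseteq X\setminus X'}S(A\cup\hat A)$ for $A\subseteq X'$. Then $F_{S'}$ is the intersection of $F_S$ with the subspace $\mathbb R^{X'}\subseteq\mathbb R^X$ (functions vanishing on $X\setminus X'$).
   Context: An entropy function for a finite set $X$ is a function $S:2^X\to[0,\infty)$ with $S(\emptyset)=0$, $S(A)+S(B)\ge S(A\cap B)+S(A\cup B)$ and $S(A)+S(B)\ge S(A\setminus B)+S(B\setminus A)$ for all $A,B\subseteq X$. An EDF for $S$ is a function $f:X\to\mathbb R$ (a vector in $\mathbb R^X$) with $\big|\sum_{x\in A}f(x)\big|\le S(A)$ for all $A\subseteq X$; $F_S$ is the set of all EDFs for $S$. $S'$ is an entropy function for $X'$. *)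

(* Defs.v *)
From HB Require Import structures.
From mathcomp Require Import all_boot all_order all_algebra.
From mathcomp Require Import reals.
Set Implicit Arguments. Unset Strict Implicit. Unset Printing Implicit Defensive.
Import Order.TTheory GRing.Theory Num.Theory.
Local Open Scope ring_scope.

Definition entropy_function (R : realType) (T : finType) (S : {set T} -> R) : Prop :=
  [/\ S set0 = 0,
      (forall A, 0 <= S A),
      (forall A B, S (A :&: B) + S (A :|: B) <= S A + S B) &
      (forall A B, S (A :\: B) + S (B :\: A) <= S A + S B)].

Definition is_EDF (R : realType) (T : finType) (S : {set T} -> R) (f : T -> R) : Prop :=
  forall A : {set T}, `| \sum_(x in A) f x | <= S A.

Definition subT (T : finType) (X' : {set T}) : finType := {x : T | x \in X'}.

Definition restr_entropy (R : realType) (T : finType) (S : {set T} -> R)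
    (X' : {set T}) (A : {set subT X'}) : R :=
  \big[Num.min/S (val @: A)]_(Ah : {set T} | Ah \subset ~: X') S ((val @: A) :|: Ah).
Arguments restr_entropy {R T} S X' A.

(* Main.v *)
Require Import Defs.
From HB Require Import structures.
From mathcomp Require Import all_boot all_order all_algebra.
From mathcomp Require Import reals.
Import Order.TTheory GRing.Theory Num.Theory.
Local Open Scope ring_scope.

Lemma bigmin_le_term (R : realType) (I : eqType) (s : seq I) (P : pred I) (F : I -> R) x0 i :
  i \in s -> P i -> \big[Num.min/x0]_(j <- s | P j) F j <= F i.
Proof.
elim: s => // a s IH; rewrite in_cons big_cons => /orP[/eqP<-|his] Pi.
  by rewrite Pi ge_min lexx.
case: ifP => _; last exact: IH.
by rewrite ge_min (IH his Pi) orbT.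
Qed.

Lemma sum_restr (R : realType) (X : finType) (X' : {set X}) (f : X -> R) (C : {set X}) :
  (forall x, x \notin X' -> f x = 0) ->
  \sum_(x in C) f x = \sum_(x in C :&: X') f x.
Proof.
move=> f0; rewrite (big_setID X') /= [X in _ + X]big1 ?addr0 // => x.
by rewrite inE => /andP[/f0].
Qed.

Lemma val_imset_sub (X : finType) (X' : {set X}) (A : {set subT X'}) :
  val @: A \subset X'.
Proof. by apply/subsetP => x /imsetP[y _ ->]; exact: (valP y). Qed.

Theorem corollary28 (R : realType) (X : finType) (S : {set X} -> R) (X' : {set X}) :
  entropy_function S ->
  forall f : X -> R,
    (is_EDF S f /\ (forall x, x \notin X' -> f x = 0)) <->
    ((forall x, x \notin X' -> f x = 0) /\
     is_EDF (restr_entropy S X') (fun y : subT X' => f (val y))).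
Proof.
move=> _ f; split.
  move=> [edf f0]; split=> // A.
  have eqs : \sum_(y in A) f (val y) = \sum_(x in val @: A) f x.
    by rewrite big_imset //; move=> y z _ _; apply: val_inj.
  rewrite /restr_entropy; apply: (big_ind (fun v => _ <= v)).
  - by rewrite eqs.
  - by move=> a b ha hb; rewrite le_min ha hb.
  move=> Ah hAh; rewrite eqs; apply: le_trans (edf _).
  rewrite [X in _ <= `|X|](@sum_restr _ _ _ _ _ f0).
  suff -> : (val @: A :|: Ah) :&: X' = val @: A by [].
  rewrite setIUl (setIidPl (val_imset_sub _ _ A)).
  suff -> : Ah :&: X' = set0 by rewrite setU0.
  apply/setP=> x; rewrite !inE; apply/negP=> /andP[hx hx'].
  by move/subsetP: hAh => /(_ x hx); rewrite inE hx'.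
move=> [f0 edf]; split=> // B.
pose A := [set y : subT X' | val y \in B].
have hA : val @: A = B :&: X'.
  apply/setP=> x; rewrite inE; apply/imsetP/andP.
    by move=> [y]; rewrite inE => hy ->; split=> //; exact: (valP y).
  move=> [hB hX]; exists (exist _ x hX) => //; by rewrite inE.
rewrite (@sum_restr _ _ _ _ _ f0) -hA big_imset /=; last by move=> y z _ _; apply: val_inj.
apply: le_trans (edf A) _.
rewrite /restr_entropy.
apply: le_trans (bigmin_le_term _ _ _ _ _ _ (B :\: X') _ _) _.
- by rewrite mem_index_enum.
- by apply/subsetP=> x; rewrite !inE => /andP[].
by rewrite hA setID.
Qed.
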